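(* Let $d\geq 1$ and let $G$ be a graph that is $(d+1)$-connected and redundantly rigid in $\mathbb{R}^d$. Suppose that $G$ is $M$-separable in $\mathbb{R}^d$ and let $H_1,\dots,H_q$ be the $M$-connected components of $G$ in $\mathbb{R}^d$. Then $\sum_{i=1}^q\mathrm{dof}_d(H_i)\geq\binom{d+1}{2}$.
   Context: A graph is $k$-connected if it has at least $k+1$ vertices and remains connected after deleting fewer than $k$ vertices. The $d$-dimensional rigidity matroid $\mathcal{R}_d(G)$ on $E(G)$ is given by linear independence of rows of the rigidity matrix of a generic realization (row of edge $uv$: $p(u)-p(v)$ in the columns of $u$, $p(v)-p(u)$ in those of $v$, zeros elsewhere), with rank function $r_d$. $G$ is rigid in $\mathbb{R}^d$ if (for $|V|\geq d+1$) $r_d(G)=d|V|-\binom{d+1}{2}$, and redundantly rigid if $G-e$ is rigid for every edge $e$. $G$ is $M$-separable in $\mathbb{R}^d$ if $\mathcal{R}_d(G)$ is not connected; its $M$-connected components are the subgraphs induced by the edge sets of the connected components of $\mathcal{R}_d(G)$ (equivalence classes of the relation ''$e=f$ or $e,f$ lie in a common circuit''). For a graph $H$, $\mathrm{dof}_d(H)=d|V(H)|-\binom{d+1}{2}-r_d(H)$. *)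

(* Defs.v *)
From HB Require Import structures.
From mathcomp Require Import all_boot all_order all_algebra.
From mathcomp Require Import boolp reals.
Set Implicit Arguments. Unset Strict Implicit. Unset Printing Implicit Defensive.
Import Order.TTheory GRing.Theory Num.Theory.

(* A (finite simple) graph is a vertex finType V with an edge set
   E : {set {set V}} all of whose members have exactly two elements. *)

Section Rigidity.
Variables (R : realType) (V : finType) (d : nat).

Definition other_end (S : {set V}) (w : V) : V := odflt w [pick x in S :\ w].

(* Rigidity matrix of the realization p, restricted to the rows of the edge
   set F: rows are indexed by all subsets S of V (rows of S \notin F are zero),
   columns by pairs (vertex, coordinate). *)
Definition rigidity_matrix (p : V -> 'I_d -> R) (F : {set {set V}}) :
  'M[R]_(#|{: {set V}}|, #|{: V * 'I_d}|) :=
  \matrix_(i, j)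
    let S := enum_val i in let wk := enum_val j in
    if (S \in F) && (wk.1 \in S) then
      (p wk.1 wk.2 - p (other_end S wk.1) wk.2)%R
    else 0%R.

Definition rank_at (p : V -> 'I_d -> R) (F : {set {set V}}) : nat :=
  \rank (rigidity_matrix p F).

Definition rank_attained (F : {set {set V}}) : pred nat :=
  fun n => `[< exists p, rank_at p F = n >].

Lemma rank_attained_ex F : exists n, rank_attained F n.
Proof. by exists (rank_at (fun _ _ => 0%R) F); apply/asboolT; exists (fun _ _ => 0%R). Qed.

Lemma rank_attained_le F n : rank_attained F n -> n <= #|{: V * 'I_d}|.
Proof. by move=> /asboolP [p <-]; exact: rank_leq_col. Qed.

(* r_d(F): the rank of the rows F in the rigidity matrix of a generic
   realization = the maximum of this rank over all realizations. *)
Definition rd (F : {set {set V}}) : nat :=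
  ex_maxn (@rank_attained_ex F) (@rank_attained_le F).

Definition circuit (E C : {set {set V}}) : bool :=
  [&& C \subset E, rd C < #|C| & [forall D : {set {set V}}, (D \proper C) ==> (rd D == #|D|)]].

Definition mrel (E : {set {set V}}) : rel {set V} :=
  fun e f => (e == f) || [exists C : {set {set V}}, [&& circuit E C, e \in C & f \in C]].

Definition M_connected (E : {set {set V}}) : bool :=
  [forall e in E, forall f in E, mrel E e f].

Definition M_separable (E : {set {set V}}) : bool := ~~ M_connected E.

Definition M_components (E : {set {set V}}) : {set {set {set V}}} :=
  equivalence_partition (mrel E) E.

Definition verts (F : {set {set V}}) : {set V} := \bigcup_(e in F) e.

Definition dof (F : {set {set V}}) : int :=
  ((d * #|verts F|)%:Z - ('C(d.+1, 2))%:Z - (rd F)%:Z)%R.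

Definition rigid (E : {set {set V}}) : Prop :=
  if d.+1 <= #|V| then rd E = d * #|V| - 'C(d.+1, 2)
  else forall u v : V, u != v -> [set u; v] \in E.

Definition redundantly_rigid (E : {set {set V}}) : Prop :=
  forall e, e \in E -> rigid (E :\ e).

Definition connected_minus (E : {set {set V}}) (X : {set V}) : Prop :=
  forall u v : V, u \notin X -> v \notin X ->
    connect (fun x y => [&& x \notin X, y \notin X & [set x; y] \in E]) u v.

Definition k_connected (k : nat) (E : {set {set V}}) : Prop :=
  k.+1 <= #|V| /\ forall X : {set V}, #|X| < k -> connected_minus E X.

End Rigidity.

(* Main.v *)
Require Import Defs.
From HB Require Import structures.
From mathcomp Require Import all_boot all_order all_algebra.
From mathcomp Require Import boolp reals.
From mathcomp Require Import zify ring.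
Set Implicit Arguments. Unset Strict Implicit. Unset Printing Implicit Defensive.
Import Order.TTheory GRing.Theory Num.Theory.

Module P_Mat1.

Section Mat.
Variables (T : finType) (r : {set T} -> nat).
Hypothesis r_card : forall X, r X <= #|X|.
Hypothesis r_mono : forall X Y : {set T}, X \subset Y -> r X <= r Y.
Hypothesis r_sub : forall X Y : {set T}, r (X :|: Y) + r (X :&: Y) <= r X + r Y.

Definition circ (E C : {set T}) : bool :=
  [&& C \subset E, r C < #|C| & [forall D : {set T}, (D \proper C) ==> (r D == #|D|)]].

Lemma indep_sub (B Z : {set T}) : r B = #|B| -> Z \subset B -> r Z = #|Z|.
Proof.
move=> rB sZB.
have h := r_sub Z (B :\: Z).
have e1 : Z :|: (B :\: Z) = B.
  apply/setP=> x; rewrite !inE; case xZ: (x \in Z) => //=.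
  by rewrite (subsetP sZB).
have e2 : Z :&: (B :\: Z) = set0.
  by apply/setP=> x; rewrite !inE; case: (x \in Z).
rewrite e1 e2 in h.
have c1 := r_card (B :\: Z). have c2 := r_card Z.
have := cardsDS sZB. have := subset_leq_card sZB.
move: h; rewrite rB => h c3 c4.
apply/eqP; rewrite eqn_leq c2 /=. lia.
Qed.

Lemma dep_circ (X : {set T}) : r X < #|X| ->
  exists C : {set T}, [/\ C \subset X, r C < #|C| &
     forall D : {set T}, D \proper C -> r D = #|D|].
Proof.
move=> hX.
have ex : exists n, [exists C : {set T}, [&& C \subset X, r C < #|C| & #|C| == n]].
  by exists #|X|; apply/existsP; exists X; rewrite subxx hX eqxx.
case: (ex_minnP ex) => n /existsP [C /and3P [sCX dC /eqP cC]] hmin.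
exists C; split => // D pDC.
apply/eqP; rewrite eqn_leq r_card /=; rewrite leqNgt; apply/negP => dD.
have sDX : D \subset X by apply: subset_trans sCX; exact: proper_sub pDC.
have := hmin #|D|; rewrite -cC.
have -> : [exists C0 : {set T}, [&& C0 \subset X, r C0 < #|C0| & #|C0| == #|D|]].
  by apply/existsP; exists D; rewrite sDX dD eqxx.
move=> /(_ isT); rewrite leqNgt; move/negP; apply.
by rewrite proper_card.
Qed.

Lemma closure_le (B : {set T}) (s : seq T) : (forall x, x \in s -> r (x |: B) <= r B) ->
  r (B :|: [set x in s]) <= r B.
Proof.
elim: s => [|a s IH] h.
  have -> : B :|: [set x in [::]] = B by apply/setP=> x; rewrite !inE orbF.
  by [].
have IH' := IH (fun x hx => h x (@mem_behead _ (a :: s) x hx)).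
have ha := h a (mem_head a s).
have e1 : (B :|: [set x in s]) :|: (a |: B) = B :|: [set x in a :: s].
  by apply/setP=> x; rewrite !inE; case: (x \in B); case: (x == a); case: (x \in s).
have s2 : B \subset (B :|: [set x in s]) :&: (a |: B).
  by apply/subsetP=> x xB; rewrite !inE xB !orbT.
have := r_sub (B :|: [set x in s]) (a |: B). rewrite e1.
have := r_mono s2. lia.
Qed.

Lemma basis (X : {set T}) : exists B : {set T}, [/\ B \subset X, r B = #|B| & r B = r X].
Proof.
have ex : exists n, [exists B : {set T}, [&& B \subset X, r B == #|B| & #|B| == n]].
  exists 0; apply/existsP; exists set0; rewrite sub0set cards0 eqxx andbT /=.
  by have := r_card set0; rewrite cards0 leqn0.
have bd : forall n, [exists B : {set T}, [&& B \subset X, r B == #|B| & #|B| == n]] -> n <= #|X|.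
  by move=> n /existsP [B /and3P [sBX _ /eqP <-]]; exact: subset_leq_card.
case: (ex_maxnP ex bd) => n /existsP [B /and3P [sBX /eqP iB /eqP cB]] hmax.
exists B; split => //.
apply/eqP; rewrite eqn_leq r_mono //=.
have h : forall x, x \in enum X -> r (x |: B) <= r B.
  move=> x; rewrite mem_enum => xX.
  case xB: (x \in B).
    by have -> : x |: B = B by apply/setUidPr; rewrite sub1set.
  rewrite leqNgt; apply/negP => lt.
  have := hmax #|x |: B|.
  have -> : [exists B0 : {set T}, [&& B0 \subset X, r B0 == #|B0| & #|B0| == #|x |: B|]].
    apply/existsP; exists (x |: B); rewrite eqxx andbT.
    rewrite subUset sub1set xX sBX /=.
    rewrite eqn_leq r_card /= cardsU1 xB /=. by rewrite -iB.
  move=> /(_ isT). by rewrite cardsU1 xB -cB ltnn.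
have := closure_le h.
have -> : [set x in enum X] = X by apply/setP=> x; rewrite inE mem_enum.
have : r X <= r (B :|: X) by apply: r_mono; exact: subsetUr.
lia.
Qed.

Lemma circ_closure (X C : {set T}) (e : T) : C \subset X -> e \in C -> r C < #|C| ->
  (forall D : {set T}, D \proper C -> r D = #|D|) -> r (X :\ e) = r X.
Proof.
move=> sCX eC dC mC.
apply/eqP; rewrite eqn_leq r_mono ?subD1set //=.
have := r_sub (X :\ e) C.
have -> : (X :\ e) :|: C = X.
  apply/setP=> x; rewrite !inE; case: eqP => [->|_] /=; first by rewrite (subsetP sCX).
  by case xX: (x \in X) => //=; apply/negbTE/negP => xC; move: xX; rewrite (subsetP sCX).
have -> : (X :\ e) :&: C = C :\ e.
  apply/setP=> x; rewrite !inE; case: (x == e) => //=.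
  by case xC: (x \in C); rewrite ?andbT ?andbF // (subsetP sCX).
have := mC _ (properD1 eC). have := cardsD1 e C. rewrite eC. lia.
Qed.

Lemma closure_circ (X : {set T}) (e : T) : e \in X -> r (X :\ e) = r X ->
  exists C : {set T}, [/\ C \subset X, e \in C, r C < #|C| & forall D : {set T}, D \proper C -> r D = #|D|].
Proof.
move=> eX hr.
case: (basis (X :\ e)) => B [sB iB rB].
have eB : e \notin B by apply/negP => /(subsetP sB); rewrite !inE eqxx.
have : r (e |: B) < #|e |: B|.
  rewrite cardsU1 eB add1n ltnS.
  have : r (e |: B) <= r X by apply: r_mono; rewrite subUset sub1set eX (subset_trans sB) ?subD1set.
  lia.
case/dep_circ => C [sC dC mC].
have eC : e \in C.
  apply/negPn/negP => eC.
  have sCB : C \subset B.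
    apply/subsetP => x xC; have := subsetP sC x xC; rewrite !inE.
    case: eqP => [xe |] //= _; by rewrite -xe xC in eC.
  by have := indep_sub iB sCB; lia.
exists C; split => //.
apply: (subset_trans sC); rewrite subUset sub1set eX /=.
exact: (subset_trans sB (subD1set _ _)).
Qed.

Lemma strong_elim (C1 C2 : {set T}) (e f : T) :
  r C1 < #|C1| -> (forall D : {set T}, D \proper C1 -> r D = #|D|) ->
  r C2 < #|C2| -> (forall D : {set T}, D \proper C2 -> r D = #|D|) ->
  e \in C1 -> e \in C2 -> f \in C1 -> f \notin C2 ->
  exists C : {set T}, [/\ C \subset (C1 :|: C2) :\ e, f \in C, r C < #|C| &
             forall D : {set T}, D \proper C -> r D = #|D|].
Proof.
move=> d1 m1 d2 m2 e1 e2 f1 f2.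
set U := C1 :|: C2.
have h1 : r (U :\ f) = r U by apply: (circ_closure _ f1 d1 m1); exact: subsetUl.
have h2 : r ((U :\ f) :\ e) = r (U :\ f).
  apply: (circ_closure _ e2 d2 m2).
  apply/subsetP=> x xC; rewrite !inE xC orbT andbT.
  by apply/negP => /eqP ex; rewrite -ex xC in f2.
apply: closure_circ.
  rewrite !inE f1 andbT; apply/negP => /eqP ef; by rewrite ef e2 in f2.
apply/eqP; rewrite eqn_leq r_mono ?subD1set //=.
have -> : (U :\ e) :\ f = (U :\ f) :\ e.
  by apply/setP=> x; rewrite !inE; case: (x == e); case: (x == f).
rewrite h2 h1. apply: r_mono. exact: subD1set.
Qed.

Lemma circ_trans_aux n : forall (C1 C2 : {set T}) (e f g : T), #|C1 :|: C2| <= n ->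
  r C1 < #|C1| -> (forall D : {set T}, D \proper C1 -> r D = #|D|) ->
  r C2 < #|C2| -> (forall D : {set T}, D \proper C2 -> r D = #|D|) ->
  e \in C1 -> f \in C1 -> f \in C2 -> g \in C2 ->
  exists C : {set T}, [/\ C \subset C1 :|: C2, e \in C, g \in C, r C < #|C| &
             forall D : {set T}, D \proper C -> r D = #|D|].
Proof.
elim: n => [|n IH] C1 C2 e f g hn d1 m1 d2 m2 e1 f1 f2 g2.
  move: hn; rewrite leqn0 => /eqP/cards0_eq => h.
  by have := subsetP (subsetUl C1 C2) f f1; rewrite h inE.
case g1: (g \in C1).
  by exists C1; split => //; exact: subsetUl.
case e2: (e \in C2).
  by exists C2; split => //; exact: subsetUr.
have [C3 [s3 e3 d3 m3]] := strong_elim d1 m1 d2 m2 f1 f2 e1 (negbT e2).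
case g3: (g \in C3).
  by exists C3; split => //; apply: (subset_trans s3); exact: subD1set.
have [h hC3 hC1] : exists2 h, h \in C3 & h \notin C1.
  apply/exists_inP; rewrite -negb_forall_in; apply/negP => /forall_inP all1.
  have sC31 : C3 \proper C1.
    rewrite properE; apply/andP; split.
      by apply/subsetP => x /all1.
    apply/negP => /subsetP/(_ f f1) fC3.
    by have := subsetP s3 f fC3; rewrite !inE eqxx.
  by have E3 := m1 _ sC31; rewrite E3 ltnn in d3.
have hC2 : h \in C2.
  by have := subsetP s3 h hC3; rewrite !inE (negbTE hC1) /= => /andP [].
have [C4 [s4 g4 d4 m4]] := strong_elim d2 m2 d3 m3 hC2 hC3 g2 (negbT g3).
have [x xC4 xC2] : exists2 x, x \in C4 & x \notin C2.
  apply/exists_inP; rewrite -negb_forall_in; apply/negP => /forall_inP all2.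
  have sC42 : C4 \proper C2.
    rewrite properE; apply/andP; split.
      by apply/subsetP => y /all2.
    apply/negP => /subsetP/(_ h hC2) hC4.
    by have := subsetP s4 h hC4; rewrite !inE eqxx.
  by have E4 := m2 _ sC42; rewrite E4 ltnn in d4.
have xC1 : x \in C1.
  have := subsetP s4 x xC4; rewrite !inE (negbTE xC2) /= => /andP [_ xC3].
  by have := subsetP s3 x xC3; rewrite !inE (negbTE xC2) orbF => /andP [].
have sU : C1 :|: C4 \subset (C1 :|: C2) :\ h.
  rewrite subUset; apply/andP; split.
    apply/subsetP => y yC1; rewrite !inE yC1 andbT.
    by apply/negP => /eqP yh; rewrite -yh yC1 in hC1.
  apply: (subset_trans s4); apply/subsetP => y; rewrite !inE.
  case/andP => -> /orP [->|]; rewrite ?orbT // => yC3.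
  by have := subsetP s3 y yC3; rewrite !inE => /andP [].
have hn' : #|C1 :|: C4| <= n.
  have := subset_leq_card sU. have := cardsD1 h (C1 :|: C2).
  rewrite !inE hC2 orbT => b a; rewrite b add1n ltnS in hn; exact: leq_trans a hn.
have [C [sC eC gC dC mC]] := IH C1 C4 e x g hn' d1 m1 d4 m4 e1 xC1 xC4 g4.
exists C; split => //.
apply: (subset_trans sC); apply: (subset_trans sU); exact: subD1set.
Qed.

Lemma sep_rank (X Y : {set T}) : X :&: Y = set0 ->
  (forall C : {set T}, C \subset X :|: Y -> r C < #|C| ->
     (forall D : {set T}, D \proper C -> r D = #|D|) -> (C \subset X) || (C \subset Y)) ->
  r X + r Y <= r (X :|: Y).
Proof.
move=> dXY hC.
have [BX [sX iX rX]] := basis X.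
have [BY [sY iY rY]] := basis Y.
have dB : BX :&: BY = set0.
  apply/setP => x; rewrite !inE; apply/negP => /andP [/(subsetP sX) xX /(subsetP sY) xY].
  have : x \in X :&: Y by rewrite inE xX xY.
    by rewrite dXY inE.
have cB : #|BX :|: BY| = #|BX| + #|BY|.
  by have := cardsUI BX BY; rewrite dB cards0 addn0.
have iB : r (BX :|: BY) = #|BX :|: BY|.
  apply/eqP; rewrite eqn_leq r_card /= leqNgt; apply/negP => /dep_circ [C [sC dC mC]].
  have sCXY : C \subset X :|: Y by apply: (subset_trans sC); exact: setUSS.
  case/orP: (hC C sCXY dC mC) => sC'.
    have sCB : C \subset BX.
      apply/subsetP => x xC; have := subsetP sC x xC; rewrite inE; case/orP => // xBY.
      have xX := subsetP sC' x xC; have xY := subsetP sY x xBY.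
      have : x \in X :&: Y by rewrite inE xX xY.
    by rewrite dXY inE.
    by have E1 := indep_sub iX sCB; rewrite E1 ltnn in dC.
  have sCB : C \subset BY.
    apply/subsetP => x xC; have := subsetP sC x xC; rewrite inE; case/orP => // xBX.
    have xY := subsetP sC' x xC; have xX := subsetP sX x xBX.
    have : x \in X :&: Y by rewrite inE xX xY.
    by rewrite dXY inE.
  by have E1 := indep_sub iY sCB; rewrite E1 ltnn in dC.
rewrite -rX -rY iX iY -cB -iB; apply: r_mono; exact: setUSS.
Qed.

Definition mrelr (E : {set T}) : rel T :=
  fun e f => (e == f) || [exists C : {set T}, [&& circ E C, e \in C & f \in C]].

Lemma mrelr_sym (E : {set T}) e f : mrelr E e f = mrelr E f e.
Proof.
rewrite /mrelr eq_sym; congr (_ || _); apply/existsP/existsP => [] [C /and3P [? ? ?]];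
  by exists C; apply/and3P.
Qed.

Lemma mrelr_trans (E : {set T}) e f g : mrelr E e f -> mrelr E f g -> mrelr E e g.
Proof.
rewrite /mrelr; case/orP => [/eqP -> //|/existsP [C1 /and3P [c1 e1 f1]]].
case/orP => [/eqP <-|/existsP [C2 /and3P [c2 f2 g2]]].
  by apply/orP; right; apply/existsP; exists C1; rewrite c1 e1 f1.
case: (eqVneq e g) => [_|_] //.
apply/orP; right.
case/and3P: c1 => s1 d1 /forallP m1. case/and3P: c2 => s2 d2 /forallP m2.
have m1' : forall D : {set T}, D \proper C1 -> r D = #|D|.
  by move=> D pD; have := m1 D; rewrite pD => /eqP.
have m2' : forall D : {set T}, D \proper C2 -> r D = #|D|.
  by move=> D pD; have := m2 D; rewrite pD => /eqP.
have [C [sC eC gC dC mC]] := circ_trans_aux (leqnn _) d1 m1' d2 m2' e1 f1 f2 g2.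
apply/existsP; exists C; rewrite eC gC !andbT /circ dC.
rewrite (subset_trans sC) /=; last by rewrite subUset s1 s2.
by apply/forallP => D; apply/implyP => pD; rewrite mC.
Qed.

Lemma mrelr_equiv (E : {set T}) : {in E & &, equivalence_rel (mrelr E)}.
Proof.
move=> x y z _ _ _; split; first by rewrite /mrelr eqxx.
move=> hxy; apply/idP/idP => h.
  by apply: mrelr_trans h; rewrite mrelr_sym.
exact: mrelr_trans hxy h.
Qed.

Lemma circ_in_block (E C : {set T}) c x : circ E C -> c \in C -> x \in C -> mrelr E c x.
Proof.
move=> cC cc xc; apply/orP; right; apply/existsP; exists C; by rewrite cC cc xc.
Qed.

Lemma sum_rank_blocks (E : {set T}) :
  \sum_(H in equivalence_partition (mrelr E) E) r H <= r E.
Proof.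
set P := equivalence_partition (mrelr E) E.
have pP := equivalence_partitionP (@mrelr_equiv E).
case/and3P: pP => /eqP covP tP nP.
have blk : forall H, H \in P -> exists2 x, x \in E & H = [set y in E | mrelr E x y].
  by move=> H /imsetP [x xE ->]; exists x.
have cib : forall C H, circ E C -> H \in P -> C :&: H != set0 -> C \subset H.
  move=> C H cC HP /set0Pn [c]; rewrite inE => /andP [cC' cH].
  have [x xE eH] := blk H HP.
  move: cH; rewrite eH inE => /andP [cE xc].
  apply/subsetP => y yC; rewrite inE.
  have yE : y \in E by case/and3P: cC => sCE _ _; exact: subsetP sCE y yC.
  by rewrite yE (mrelr_trans xc (circ_in_block cC cC' yC)).
have key : forall s : seq {set T}, uniq s -> {subset s <= P} ->
    \sum_(H <- s) r H <= r (\bigcup_(H <- s) H).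
  elim => [|H s IH] /= => [_ _|/andP [Hs us] sub]; first by rewrite big_nil.
  rewrite !big_cons.
  have HP : H \in P by apply: sub; exact: mem_head.
  have sub' : {subset s <= P} by move=> K Ks; apply: sub; rewrite inE Ks orbT.
  have := IH us sub'.
  set U := \bigcup_(K <- s) K => hU.
  apply: leq_trans (_ : r H + r U <= _); first by rewrite leq_add2l.
  apply: sep_rank.
    apply/setP => x; rewrite !inE; apply/negP => /andP [xH].
    rewrite /U bigcup_seq => /bigcupP [K Ks xK].
    have KP := sub' K Ks.
    have HK : H != K by apply/negP => /eqP HK; rewrite HK Ks in Hs.
    have := trivIsetP tP H K HP KP HK; rewrite -setI_eq0 => /eqP e0.
    have : x \in H :&: K by rewrite inE xH xK.
    by rewrite e0 inE.
  move=> C sC dC mC.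
  have cC : circ E C.
    rewrite /circ dC (subset_trans sC) /=.
      by apply/forallP => D; apply/implyP => pD; rewrite mC.
    rewrite subUset -covP; apply/andP; split; first exact: bigcup_sup.
    rewrite /U bigcup_seq; apply/bigcupsP => K Ks; apply: bigcup_sup; exact: sub'.
  case: (eqVneq (C :&: H) set0) => [e0|ne]; last by rewrite cib.
  apply/orP; right; apply/subsetP => x xC.
  have := subsetP sC x xC; rewrite inE; case/orP => // xH.
  have : x \in C :&: H by rewrite inE xC xH.
    by rewrite e0 inE.
have subP : {subset enum P <= P} by move=> K; rewrite mem_enum.
have := key (enum P) (enum_uniq _) subP.
rewrite big_enum /= => h; apply: (leq_trans h); apply: r_mono.
rewrite -covP /cover bigcup_seq; apply/bigcupsP => K; rewrite mem_enum => KP.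
exact: bigcup_sup.
Qed.

End Mat.

End P_Mat1.
Import P_Mat1.

Module P_Gen.
Local Open Scope ring_scope.

Section Gen.
Variable R : realType.

Lemma nonroot_ex (f : {poly R}) : f != 0 -> exists t : R, f.[t] != 0.
Proof.
move=> f0; apply/not_existsP => /= h.
set rs := [seq i%:R | i <- iota 0 (size f)] : seq R.
have := @max_poly_roots _ f rs f0.
rewrite size_map size_iota ltnn => H; suff : false by []; apply: H.
  apply/allP => x /mapP [i _ ->]; rewrite /root; apply/negPn/negP => ne.
  by apply: (h i%:R).
by rewrite map_inj_uniq ?iota_uniq // => i j /eqP; rewrite eqr_nat => /eqP.
Qed.

Lemma poly_rank m n (A B : 'M[R]_(m, n)) (t0 : R) :
  exists f : {poly R}, f != 0 /\
    forall t, f.[t] != 0 -> (\rank (A + t0 *: B)%R <= \rank (A + t *: B)%R)%N.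
Proof.
set C := A + t0 *: B; set r := \rank C.
set L := (pid_mx r : 'M[R]_(r, m)) *m invmx (col_ebase C).
set Q := invmx (row_ebase C) *m (pid_mx r : 'M[R]_(n, r)).
have LCQ : L *m C *m Q = 1%:M.
  rewrite /L /Q -{2}(mulmx_ebase C) -/r.
  rewrite !mulmxA mulmxKV ?col_ebase_unit //.
  rewrite -(mulmxA _ (row_ebase C)) mulmxV ?row_ebase_unit // mulmx1.
  rewrite !mul_pid_mx !minnn.
  have -> : minn m r = r by apply/minn_idPr; exact: rank_leq_row.
  rewrite minnn.
  have -> : minn n r = r by apply/minn_idPr; exact: rank_leq_col.
  by rewrite pid_mx_1.
set f := \det (map_mx polyC (L *m A *m Q) + 'X *: map_mx polyC (L *m B *m Q)).
have ev : forall t, f.[t] = \det (L *m (A + t *: B) *m Q).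
  move=> t; rewrite -horner_evalE -det_map_mx; congr (\det _).
  rewrite mulmxDr mulmxDl -scalemxAr -scalemxAl.
  apply/matrixP => i j; rewrite !mxE /= horner_evalE.
  by rewrite hornerD hornerM hornerX !hornerC mulrC.
exists f; split.
  apply/negP => /eqP f0.
  have := ev t0; rewrite f0 horner0 LCQ det1 => /eqP; by rewrite eq_sym oner_eq0.
move=> t ft.
have u : L *m (A + t *: B) *m Q \in unitmx by rewrite unitmxE unitfE -ev.
have := mxrank_unit u.
move=> e; apply: (@leq_trans (\rank (L *m (A + t *: B) *m Q)%R)).
  by rewrite e.
apply: (leq_trans (mxrankM_maxl _ _)); exact: mxrankM_maxr.
Qed.

Lemma avoid_all (Ps : seq (R -> Prop)) :
  (forall P, List.In P Ps -> exists f : {poly R}, f != 0 /\ forall t, f.[t] != 0 -> P t) ->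
  exists t, forall P, List.In P Ps -> P t.
Proof.
move=> h.
suff [f [f0 hf]] : exists f : {poly R}, f != 0 /\ forall t, f.[t] != 0 -> forall P, List.In P Ps -> P t.
  by have [t ht] := nonroot_ex f0; exists t; exact: hf.
elim: Ps h => [|P Ps IH] h.
  by exists 1; split; [exact: oner_neq0 | move=> t _ P []].
have [g [g0 hg]] := h P (or_introl erefl).
have [f [f0 hf]] := IH (fun Q hQ => h Q (or_intror hQ)).
exists (g * f); split; first by rewrite mulf_neq0.
move=> t; rewrite hornerM mulf_eq0 negb_or => /andP [gt ft] Q [<-|hQ].
  exact: hg.
exact: hf.
Qed.

Variables (V : finType) (d : nat).
Definition conf := V -> 'I_d -> R.
Definition lerp (p q : conf) (t : R) : conf := fun v k => p v k + t * (q v k - p v k).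

Record lmat := LMat { lm : nat; ln : nat; lf : conf -> 'M[R]_(lm, ln);
  lf_lin : forall p q t, lf (lerp p q t) = lf p + t *: (lf q - lf p) }.

Lemma maxp (x : lmat) : exists q, forall q', (\rank (lf x q') <= \rank (lf x q))%N.
Proof.
pose P := fun k => `[< exists q, \rank (lf x q) = k >].
have ex : exists k, P k.
  by exists (\rank (lf x (fun _ _ => 0))); apply/asboolP; exists (fun _ _ => 0).
have bd : forall k, P k -> (k <= ln x)%N.
  by move=> k /asboolP [q <-]; exact: rank_leq_col.
case: (ex_maxnP ex bd) => k /asboolP [q qk] hmax.
exists q => q'; rewrite qk; apply: hmax; apply/asboolP; by exists q'.
Qed.

Lemma generic (s : seq lmat) :
  exists p, forall x, List.In x s -> forall q, (\rank (lf x q) <= \rank (lf x p))%N.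
Proof.
elim: s => [|x0 s [p hp]]; first by exists (fun _ _ => 0).
have [q hq] := maxp x0.
pose Ps : seq (R -> Prop) := (fun t : R => is_true (\rank (lf x0 q) <= \rank (lf x0 (lerp p q t)))%N) ::
  [seq (fun t : R => is_true (\rank (lf y p) <= \rank (lf y (lerp p q t)))%N) | y <- s].
have [t ht] : exists t : R, forall P, List.In P Ps -> P t.
  apply: avoid_all => P [<-|].
    have [f [f0 hf]] := poly_rank (lf x0 p) (lf x0 q - lf x0 p) 1.
    exists f; split => // t ft; rewrite lf_lin.
    by have := hf t ft; rewrite scale1r addrC subrK.
  move=> /List.in_map_iff [y [<- _]].
  have [f [f0 hf]] := poly_rank (lf y p) (lf y q - lf y p) 0.
  exists f; split => // t ft; rewrite lf_lin.
  by have := hf t ft; rewrite scale0r addr0.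
exists (lerp p q t) => x [<-|xs] q'.
  apply: (leq_trans (hq q')); exact: (ht _ (or_introl erefl)).
apply: (leq_trans (hp x xs q')).
have := ht (fun t : R => is_true (\rank (lf x p) <= \rank (lf x (lerp p q t)))%N).
apply; right; apply/List.in_map_iff; by exists x.
Qed.

End Gen.

End P_Gen.
Import P_Gen.

Module P_Rk.

Section Rk.
Variables (R : realType) (V : finType) (d : nat) (p : V -> 'I_d -> R).
Local Notation M F := (rigidity_matrix p F).

Lemma rigE (F : {set {set V}}) i j : M F i j =
  if (enum_val i \in F) && ((enum_val j).1 \in enum_val i) then
    (p (enum_val j).1 (enum_val j).2 - p (other_end (enum_val i) (enum_val j).1) (enum_val j).2)%R
  else 0%R.
Proof. by rewrite mxE. Qed.

Lemma row_M (F : {set {set V}}) i : row i (M F) = if enum_val i \in F then row i (M setT) else 0%R.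
Proof.
apply/rowP => j; rewrite !mxE; case h: (enum_val i \in F); rewrite ?mxE; cbv zeta; rewrite ?in_setT ?h //=.
Qed.

Lemma M_sub (F G : {set {set V}}) : F \subset G -> (M F <= M G)%MS.
Proof.
move=> sFG; apply/row_subP => i; rewrite row_M.
case: ifP => h; last exact: sub0mx.
have : enum_val i \in G by exact: subsetP sFG _ h.
by move=> hG; rewrite -[row i (M setT)](_ : row i (M G) = _) ?row_sub // row_M hG.
Qed.

Lemma M_U (F G : {set {set V}}) : (M (F :|: G) <= M F + M G)%MS.
Proof.
apply/row_subP => i; rewrite row_M inE.
case hF: (enum_val i \in F) => /=.
  have : row i (M F) = row i (M setT) by rewrite row_M hF.
  move <-; apply: (submx_trans (row_sub _ _)); exact: addsmxSl.
case hG: (enum_val i \in G) => /=; last exact: sub0mx.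
have : row i (M G) = row i (M setT) by rewrite row_M hG.
move <-; apply: (submx_trans (row_sub _ _)); exact: addsmxSr.
Qed.

Lemma rank_M1 (a : {set V}) : (\rank (M [set a]) <= 1)%N.
Proof.
apply: (@leq_trans (\rank (row (enum_rank a) (M setT)))); last exact: rank_leq_row.
apply: mxrankS; apply/row_subP => i; rewrite row_M inE.
case: eqP => [ia|_]; last exact: sub0mx.
by rewrite -ia enum_valK submx_refl.
Qed.

Lemma rank_M_card (F : {set {set V}}) : (\rank (M F) <= #|F|)%N.
Proof.
suff h : forall s : seq {set V}, (\rank (M [set x in s]) <= size s)%N.
  have := h (enum F); rewrite -cardE.
  by have -> : [set x in enum F] = F by apply/setP => x; rewrite inE mem_enum.
elim => [|a s IH].
  have -> : [set x in [::]] = set0 :> {set {set V}} by apply/setP => x; rewrite !inE.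
  suff -> : M set0 = 0%R by rewrite mxrank0.
  by apply/matrixP => i j; rewrite rigE mxE inE.
have e : [set x in a :: s] = [set a] :|: [set x in s].
  by apply/setP => x; rewrite !inE.
rewrite e /=.
apply: (leq_trans (mxrankS (M_U _ _))).
apply: (leq_trans (mxrank_adds_leqif _ _)).
exact: leq_add (rank_M1 a) IH.
Qed.

Lemma rank_M_mono (F G : {set {set V}}) : F \subset G -> (\rank (M F) <= \rank (M G))%N.
Proof. by move=> h; apply: mxrankS; exact: M_sub. Qed.

Lemma rank_M_sub (F G : {set {set V}}) :
  (\rank (M (F :|: G)) + \rank (M (F :&: G)) <= \rank (M F) + \rank (M G))%N.
Proof.
rewrite -[X in (_ <= X)%N]mxrank_sum_cap; apply: leq_add; apply: mxrankS; first exact: M_U.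
by rewrite sub_capmx !M_sub // ?subsetIl ?subsetIr.
Qed.

End Rk.

End P_Rk.
Import P_Rk.

Module P_Kern.
Local Open Scope ring_scope.

Section Kern.
Variables (R : realType) (V : finType) (d : nat).

Lemma skew_quad (S : 'I_d -> 'I_d -> R) (x : 'I_d -> R) :
  (forall k j, S k j = - S j k) -> \sum_k x k * (\sum_j S k j * x j) = 0.
Proof.
move=> sk.
set s := \sum_k _.
have e1 : s = \sum_k \sum_j x k * S k j * x j.
  by apply: eq_bigr => k _; rewrite mulr_sumr; apply: eq_bigr => j _; rewrite mulrA.
have e2 : s = - s.
  rewrite {1}e1 exchange_big /= /s -sumrN; apply: eq_bigr => k _.
  rewrite mulr_sumr -sumrN; apply: eq_bigr => j _.
  by rewrite sk; ring.
have : s *+ 2 == 0 by rewrite mulr2n {2}e2 subrr.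
by rewrite mulrn_eq0 /= => /eqP.
Qed.

Lemma other_end2 (u v : V) : u != v -> other_end [set u; v] u = v.
Proof.
move=> uv; rewrite /other_end; case: pickP => [x|h] /=.
  rewrite !inE; case/andP => xu /orP [/eqP xu'|/eqP //].
  by rewrite xu' eqxx in xu.
by have := h v; rewrite !inE eqxx orbT andbT eq_sym uv.
Qed.

(* the row of an edge applied to a "motion" m *)
Lemma edge_row (p : V -> 'I_d -> R) (m : V -> 'I_d -> R) (S : {set V}) :
  #|S| = 2%N ->
  (forall u v, \sum_k (p u k - p v k) * (m u k - m v k) = 0) ->
  \sum_w \sum_k (if w \in S then p w k - p (other_end S w) k else 0) * m w k = 0.
Proof.
move=> /eqP /cards2P [u [v [uv ->]]] hm.
have -> : \sum_w \sum_k (if w \in [set u; v] then p w k - p (other_end [set u; v] w) k else 0) * m w k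
   = \sum_(w in [set u; v]) \sum_k (p w k - p (other_end [set u; v] w) k) * m w k.
  rewrite [RHS]big_mkcond /=; apply: eq_bigr => w _; case: (w \in _) => //.
  by apply: big1 => k _; rewrite mul0r.
rewrite big_setU1 /=; last by rewrite inE.
rewrite big_set1 other_end2 //.
have -> : [set u; v] = [set v; u] by rewrite setUC.
rewrite other_end2 1?eq_sym //.
rewrite -big_split /= -[RHS](hm u v); apply: eq_bigr => k _.
by ring.
Qed.

Lemma sum_enum (T : finType) (G : T -> R) :
  \sum_(j < #|{: T}|) G (enum_val j) = \sum_x G x.
Proof. by rewrite -(big_enum_val G). Qed.

Definition I2 := {A : {set 'I_d} | #|A| == 2%N}.
Definition Idx := ('I_d + I2)%type.

Definition rotc (A : {set 'I_d}) (k j : 'I_d) : R :=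
  if enum A is [:: a; b] then (k == a)%:R * (j == b)%:R - (k == b)%:R * (j == a)%:R else 0.

Definition mot (p : V -> 'I_d -> R) (i : Idx) (w : V) (k : 'I_d) : R :=
  match i with inl c => (k == c)%:R | inr A => \sum_j rotc (val A) k j * p w j end.

Lemma rotc_skew A k j : rotc A k j = - rotc A j k.
Proof. by rewrite /rotc; case: (enum A) => [|a [|b [|c l]]] /=; rewrite ?oppr0 //; ring. Qed.

Lemma mot_ok p i u v : \sum_k (p u k - p v k) * (mot p i u k - mot p i v k) = 0.
Proof.
case: i => [c|A] /=.
  by apply: big1 => k _; rewrite subrr mulr0.
have -> : \sum_k (p u k - p v k) * (\sum_j rotc (val A) k j * p u j - \sum_j rotc (val A) k j * p v j)
   = \sum_k (p u k - p v k) * (\sum_j rotc (val A) k j * (p u j - p v j)).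
  apply: eq_bigr => k _; congr (_ * _); rewrite -sumrB; apply: eq_bigr => j _.
  by rewrite mulrBr.
by apply: skew_quad => k j; exact: rotc_skew.
Qed.

Lemma card_Idx : #|{: Idx}| = 'C(d.+1, 2).
Proof.
rewrite card_sum card_ord card_sig.
have -> : #|[pred A : {set 'I_d} | #|A| == 2%N]| = #|[set A : {set 'I_d} | #|A| == 2%N]|.
  by apply: eq_card => A; rewrite !inE.
by rewrite card_draws card_ord binS bin1 addnC.
Qed.

Lemma enum2 (A : I2) : exists a b, a != b /\ enum (val A) = [:: a; b].
Proof.
case: A => X /= /eqP cX.
have u := enum_uniq (mem X).
have sz : size (enum X) = 2%N by rewrite -cardE.
move: u sz; case: (enum X) => [|a [|b [|c l]]] //= /andP [ab _] _.
by exists a, b; split => //; move: ab; rewrite inE.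
Qed.

Lemma enum_set2 (X : {set 'I_d}) a b : enum X = [:: a; b] -> X = [set a; b].
Proof. by move=> e; apply/setP => x; rewrite -mem_enum e !inE. Qed.

Lemma rotc_diag (A : I2) a b : enum (val A) = [:: a; b] -> a != b ->
  forall A' : I2, rotc (val A') a b = (A' == A)%:R.
Proof.
move=> eA ab A'.
have [a' [b' [ab' eA']]] := enum2 A'.
rewrite /rotc eA'.
case: (eqVneq A' A) => [eAA|ne].
  move: eA'; rewrite eAA eA => -[<- <-]; rewrite !eqxx (negbTE ab) eq_sym (negbTE ab).
  by rewrite mulr1 mul0r subr0.
have XA := enum_set2 eA. have XA' := enum_set2 eA'.
case: (eqVneq a a') => [ea|na]; case: (eqVneq b b') => [eb|nb];
  case: (eqVneq a b') => [ea2|na2]; case: (eqVneq b a') => [eb2|nb2];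
  rewrite /= ?mul0r ?mulr0 ?subr0 ?subrr //.
all: try (by exfalso; move: ne; rewrite -(inj_eq val_inj) XA XA' ?ea ?eb eqxx).
all: try (by exfalso; move: ne; rewrite -(inj_eq val_inj) XA XA' ?ea2 ?eb2 setUC eqxx).
all: try (by move: ab'; rewrite -?ea -?eb -?ea2 -?eb2 eqxx).
all: try (by move: ab; rewrite ?ea ?eb ?ea2 ?eb2 -?ea -?eb eqxx).
Qed.

Definition Wm (p : V -> 'I_d -> R) (vv : 'I_d.+1 -> V) : 'M[R]_d :=
  \matrix_(i, j) (p (vv (lift ord0 i)) j - p (vv ord0) j).

Lemma mot_indep p (vv : 'I_d.+1 -> V) (al : Idx -> R) :
  Wm p vv \in unitmx ->
  (forall w k, \sum_i al i * mot p i w k = 0) -> forall i, al i = 0.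
Proof.
move=> uW h.
pose S := fun k j => \sum_(A : I2) al (inr A) * rotc (val A) k j.
have hS : forall w k, al (inl k) + \sum_j S k j * p w j = 0.
  move=> w k; rewrite -[RHS](h w k) big_sumType /=; congr (_ + _).
    rewrite (bigD1 k) //= eqxx mulr1 big1 ?addr0 // => c ck.
    by rewrite eq_sym (negbTE ck) mulr0.
  rewrite /S; under eq_bigr do rewrite mulr_suml.
  rewrite exchange_big /=; apply: eq_bigr => A _; rewrite mulr_sumr.
  by apply: eq_bigr => j _; rewrite mulrA.
have S0 : forall k j, S k j = 0.
  pose Sm := \matrix_(k, j) S k j : 'M[R]_d.
  have e : Sm *m (Wm p vv)^T = 0.
    apply/matrixP => k i; rewrite !mxE.
    have e1 : \sum_j Sm k j * (Wm p vv)^T j i =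
       \sum_j S k j * p (vv (lift ord0 i)) j - \sum_j S k j * p (vv ord0) j.
      by rewrite -sumrB; apply: eq_bigr => j _; rewrite !mxE mulrBr.
    rewrite e1.
    have a1 := hS (vv (lift ord0 i)) k. have a2 := hS (vv ord0) k.
    have : \sum_j S k j * p (vv (lift ord0 i)) j = - al (inl k).
      by apply/eqP; rewrite -addr_eq0 addrC a1.
    move=> ->.
    have : \sum_j S k j * p (vv ord0) j = - al (inl k).
      by apply/eqP; rewrite -addr_eq0 addrC a2.
    by move=> ->; rewrite subrr.
  have := congr1 (mulmx^~ (invmx (Wm p vv)^T)) e.
  rewrite mulmxK ?unitmx_tr // mul0mx => Sm0 k j.
  by have := congr1 (fun M : 'M[R]_d => M k j) Sm0; rewrite !mxE.
case => [k|A].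
  have := hS (vv ord0) k.
  by rewrite big1 ?addr0 // => j _; rewrite S0 mul0r.
have [a [b [ab eA]]] := enum2 A.
have := S0 a b; rewrite /S (bigD1 A) //= (rotc_diag eA ab) eqxx mulr1.
rewrite big1 ?addr0 // => A' nA'.
by rewrite (rotc_diag eA ab) (negbTE nA') mulr0.
Qed.

Lemma rank_bound p (vv : 'I_d.+1 -> V) (F : {set {set V}}) :
  Wm p vv \in unitmx -> (forall S, S \in F -> #|S| = 2%N) ->
  (\rank (rigidity_matrix p F) + 'C(d.+1, 2) <= #|V| * d)%N.
Proof.
move=> uW hF.
pose X := \matrix_(i < #|{: Idx}|, j < #|{: V * 'I_d}|)
   mot p (enum_val i) (enum_val j).1 (enum_val j).2.
have XM : X *m (rigidity_matrix p F)^T = 0.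
  apply/matrixP => i s; rewrite [LHS]mxE [RHS]mxE.
  pose H := fun w k => (if w \in enum_val s then p w k - p (other_end (enum_val s) w) k else 0)
                        * mot p (enum_val i) w k.
  case hs: (enum_val s \in F).
    have -> : \sum_j X i j * (rigidity_matrix p F)^T j s =
              \sum_(j < #|{: V * 'I_d}|) (fun x => H x.1 x.2) (enum_val j).
      by apply: eq_bigr => j _; rewrite [_^T _ _]mxE rigE hs /= /H mulrC /X mxE.
    rewrite (sum_enum (fun x => H x.1 x.2)) -(pair_bigA _ H) /H.
    exact: edge_row (hF _ hs) (mot_ok p (enum_val i)).
  by apply: big1 => j _; rewrite [_^T _ _]mxE rigE hs /= mulr0.
have rfX : row_free X.
  rewrite -kermx_eq0; apply/eqP/matrixP => r c; rewrite [RHS]mxE.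
  pose al := row r (kermx X).
  have aX : al *m X = 0 by rewrite /al -row_mul mulmx_ker row0.
  pose al' := fun i : Idx => al 0 (enum_rank i).
  have h : forall w k, \sum_i al' i * mot p i w k = 0.
    move=> w k.
    have hz := congr1 (fun M : 'M[R]_(1, #|{: V * 'I_d}|) => M 0 (enum_rank (w, k))) aX.
    rewrite /= [RHS]mxE in hz; rewrite -[RHS]hz [RHS]mxE.
    rewrite -(sum_enum (fun i => al' i * mot p i w k)).
    apply: eq_bigr => j _; rewrite /al' enum_valK !mxE enum_rankK /=.
    by [].
  have := mot_indep uW h (enum_val c); rewrite /al' enum_valK /al mxE.
  by [].
have rX : \rank X = #|{: Idx}| by apply/eqP.
have sub : (X <= kermx (rigidity_matrix p F)^T)%MS by rewrite sub_kermx XM.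
have := mxrankS sub; rewrite mxrank_ker mxrank_tr rX card_Idx.
have := rank_leq_col (rigidity_matrix p F).
move: (\rank (rigidity_matrix p F)) => rr.
have -> : #|{: V * 'I_d}| = (#|V| * d)%N by rewrite card_prod card_ord.
move: ('C(_, _)) => cc; lia.
Qed.

End Kern.

End P_Kern.
Import P_Kern.

Module P_Small.
Local Open Scope ring_scope.

Section Small.
Variables (R : realType) (V : finType) (d : nat).

Lemma two_set (S : {set V}) a : #|S| = 2%N -> a \in S ->
  [/\ other_end S a \in S, other_end S a != a & S = [set a; other_end S a]].
Proof.
move=> /eqP /cards2P [u [v [uv ->]]]; rewrite !inE => /orP [] /eqP ->.
  by rewrite other_end2 //; split => //; rewrite ?inE ?eqxx ?orbT // eq_sym.
have -> : [set u; v] = [set v; u] by rewrite setUC.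
have vu : v != u by rewrite eq_sym.
by rewrite (other_end2 vu); split => //; rewrite ?inE ?eqxx ?orbT.
Qed.

Lemma small_indep (F : {set {set V}}) : (forall S, S \in F -> #|S| = 2%N) ->
  (#|verts F| <= d)%N -> exists p : V -> 'I_d -> R, (#|F| <= rank_at p F)%N.
Proof.
move=> h2 hU.
case: (set_0Vmem F) => [->|[S0 S0F]]; first by exists (fun _ _ => 0); rewrite cards0.
have [x0 x0S0] : exists x0, x0 \in S0.
  by have /eqP /cards2P [u [v [_ e]]] := h2 _ S0F; exists u; rewrite e !inE eqxx.
set U := verts F.
have inU : forall S v, S \in F -> v \in S -> v \in U.
  by move=> S v SF vS; apply/bigcupP; exists S.
have x0U : x0 \in U := inU _ _ S0F x0S0.
pose io (v : V) : 'I_d := widen_ord hU (enum_rank_in x0U v).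
have io_inj : {in U &, injective io}.
  move=> v w vU wU /(congr1 val) /= /val_inj e.
  by rewrite -(enum_rankK_in x0U vU) -(enum_rankK_in x0U wU) e.
pose p := fun (v : V) (k : 'I_d) => (k == io v)%:R : R.
exists p.
pose aS := fun S : {set V} => odflt x0 [pick x in S].
have aSin : forall S, S \in F -> aS S \in S.
  move=> S SF; rewrite /aS; case: pickP => [x //|h].
  have /eqP /cards2P [u [v [_ e]]] := h2 _ SF.
  by have := h u; rewrite e !inE eqxx.
pose c := fun S : {set V} => (aS S, io (other_end S (aS S))).
pose f := fun i : 'I_#|F| => enum_rank (enum_val i).
pose g := fun i : 'I_#|F| => enum_rank (c (enum_val i)).
pose N := mxsub f g (rigidity_matrix p F).
have eN : forall i i', N i i' = if i == i' then -1 else 0.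
  move=> i i'; rewrite mxE rigE /f /g !enum_rankK.
  set S := enum_val i; set S' := enum_val i'.
  have SF : S \in F by exact: enum_valP.
  have S'F : S' \in F by exact: enum_valP.
  rewrite SF /=.
  have a'S' := aSin _ S'F.
  have [b'S' b'a' eS'] := two_set (h2 _ S'F) a'S'.
  set a' := aS S' in a'S' b'S' b'a' eS' *; set b' := other_end S' a' in b'S' b'a' eS' *.
  have a'U := inU _ _ S'F a'S'. have b'U := inU _ _ S'F b'S'.
  have eab : (io b' == io a') = false.
    apply/negbTE/negP => /eqP e.
    by have := io_inj _ _ b'U a'U e; move/eqP; rewrite (negbTE b'a').
  case a'S: (a' \in S).
    have [oS oa eS] := two_set (h2 _ SF) a'S.
    have oU := inU _ _ SF oS.
    rewrite /p eab sub0r.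
    have -> : (io b' == io (other_end S a')) = (b' == other_end S a').
      by apply/eqP/eqP => [e|-> //]; apply: io_inj e.
    case: (eqVneq i i') => [ii|ne].
      have eSS : S' = S by rewrite /S' /S ii.
      have -> : b' = other_end S a' by rewrite /b' eSS.
      by rewrite eqxx.
    case: (eqVneq b' (other_end S a')) => [eb|]; last by rewrite oppr0.
    exfalso; move: ne; rewrite -(inj_eq enum_val_inj) -/S -/S'.
    by rewrite eS eS' eb eqxx.
  case: (eqVneq i i') => [ii|] //.
  by move: a'S; rewrite /S ii -/S' a'S'.
have NN : N *m N = 1%:M.
  apply/matrixP => i j; rewrite !mxE (bigD1 i) //= big1 ?addr0.
    rewrite !eN eqxx; case: (eqVneq i j) => [_|ne]; first by rewrite mulrNN mulr1.
    by rewrite mulr0.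
  by move=> k ki; rewrite !eN eq_sym (negbTE ki) mul0r.
have uN : N \in unitmx by case: (mulmx1_unit NN).
have := mxrank_unit uN.
rewrite /rank_at => <-.
rewrite /N.
have -> : mxsub f g (rigidity_matrix p F) = mxsub f id (mxsub id g (rigidity_matrix p F)).
  by apply/matrixP => i j; rewrite !mxE.
apply: (leq_trans (mxrankS (rowsub_sub _ _))).
have -> : mxsub id g (rigidity_matrix p F) = rigidity_matrix p F *m mxsub id g 1%:M.
  by rewrite mulmx_colsub mulmx1.
exact: mxrankM_maxl.
Qed.

End Small.

End P_Small.
Import P_Small.

Module P_Comb.

Section Comb.
Variables (V : finType) (E : {set {set V}}) (P : {set {set {set V}}}) (k : nat).
Hypothesis pP : partition P E.
Hypothesis cov : forall x : V, exists2 e, e \in E & x \in e.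
Hypothesis bigH : forall H, H \in P -> k <= #|verts H|.
Hypothesis P2 : 2 <= #|P|.
Hypothesis conn : forall X : {set V}, #|X| < k -> connected_minus E X.

Definition cnt (v : V) := #|[set H in P | v \in verts H]|.
Definition shared (H : {set {set V}}) := [set v in verts H | 1 < cnt v].

Lemma cardE_sum (T : finType) (A : {set T}) : #|A| = \sum_v (v \in A : nat).
Proof. by rewrite -sum1_card big_mkcond /=; apply: eq_bigr => v _; case: (v \in A). Qed.

Lemma in_verts (H : {set {set V}}) (v : V) : (v \in verts H) = [exists e in H, v \in e].
Proof.
apply/bigcupP/existsP => [[e eH ve]|[e /andP [eH ve]]]; first by exists e; rewrite eH.
by exists e.
Qed.

Lemma cnt_pos v : 0 < cnt v.
Proof.
have [e eE ve] := cov v.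
case/and3P: pP => /eqP covP _ _.
move: eE; rewrite -covP => /bigcupP [H HP eH].
rewrite /cnt card_gt0; apply/set0Pn; exists H; rewrite inE HP /=.
by apply/bigcupP; exists e.
Qed.

Lemma shared_big (H : {set {set V}}) : H \in P -> k <= #|shared H|.
Proof.
move=> HP; rewrite leqNgt; apply/negP => lt.
case/and3P: pP => /eqP covP tP _.
have [u uH uS] : exists2 u, u \in verts H & u \notin shared H.
  apply/exists_inP; rewrite -negb_forall_in; apply/negP => /forall_inP all1.
  have : verts H \subset shared H by apply/subsetP => x /all1.
  move/subset_leq_card; have := bigH HP; lia.
have [H' H'P H'H] : exists2 H', H' \in P & H' != H.
  apply/exists_inP; rewrite -negb_forall_in; apply/negP => /forall_inP all1.
  have : P \subset [set H] by apply/subsetP => x xP; rewrite inE; have := all1 x xP; case: eqP.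
  by move/subset_leq_card; rewrite cards1; lia.
have [w wH' wS] : exists2 w, w \in verts H' & w \notin shared H.
  apply/exists_inP; rewrite -negb_forall_in; apply/negP => /forall_inP all1.
  have : verts H' \subset shared H by apply/subsetP => x /all1.
  move/subset_leq_card; have := bigH H'P; lia.
have two : forall v, v \in verts H -> v \in verts H' -> v \in shared H.
  move=> v vH vH'; rewrite inE vH /= /cnt.
  have : [set H; H'] \subset [set K in P | v \in verts K].
    by apply/subsetP => K; rewrite !inE => /orP [] /eqP ->; rewrite ?HP ?H'P.
  by move/subset_leq_card; rewrite cards2 eq_sym H'H.
have wH : w \notin verts H by apply/negP => wH; rewrite (two w wH wH') in wS.
have := conn lt uS wS.
move=> /connectP [s pth wl].
suff : last u s \in verts H by rewrite -wl (negbTE wH).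
elim: s u uH uS pth {wl} => [|y s IH] x xH xS //=.
case/andP => /and3P [_ yS eE] pth.
apply: IH => //.
have : [set x; y] \in cover P by rewrite covP.
case/bigcupP => K KP eK.
have xK : x \in verts K by apply/bigcupP; exists [set x; y] => //; rewrite !inE eqxx.
have yK : y \in verts K by apply/bigcupP; exists [set x; y] => //; rewrite !inE eqxx orbT.
case: (eqVneq K H) => [<- //|KH].
exfalso; move: xS; rewrite inE xH /= /cnt.
have : [set H; K] \subset [set K' in P | x \in verts K'].
  by apply/subsetP => K'; rewrite !inE => /orP [] /eqP ->; rewrite ?HP ?KP.
by move/subset_leq_card; rewrite cards2 eq_sym KH => ->.
Qed.

Lemma comb : 2 * #|V| + #|P| * k <= 2 * \sum_(H in P) #|verts H|.
Proof.
have e1 : \sum_(H in P) #|verts H| = \sum_v cnt v.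
  rewrite (eq_bigr (fun H => \sum_v (v \in verts H : nat))); last by move=> H _; exact: (cardE_sum _).
  rewrite exchange_big /=; apply: eq_bigr => v _.
  rewrite /cnt (cardE_sum [set H in P | v \in verts H]) big_mkcond /=; apply: eq_bigr => H _.
  by rewrite inE; case: (H \in P).
have e2 : \sum_(H in P) #|shared H| = \sum_v (if 1 < cnt v then cnt v else 0).
  rewrite (eq_bigr (fun H => \sum_v (v \in shared H : nat))); last by move=> H _; exact: (cardE_sum _).
  rewrite exchange_big /=; apply: eq_bigr => v _.
  case: ifP => c1.
    rewrite /cnt (cardE_sum [set H in P | v \in verts H]) big_mkcond /=; apply: eq_bigr => H _.
    by rewrite !inE -/(cnt v) c1 andbT; case: (H \in P).
  by apply: big1 => H _; rewrite inE c1 andbF.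
have e3 : #|P| * k <= \sum_(H in P) #|shared H|.
  rewrite -sum_nat_const; apply: leq_sum => H HP; exact: shared_big.
rewrite e1; rewrite e2 in e3.
have e4 : 2 * #|V| = \sum_(v : V) 2.
  by rewrite -cardsT (cardE_sum [set: V]) big_distrr /=; apply: eq_bigr => v _; rewrite in_setT.
have : 2 * #|V| + \sum_v (if 1 < cnt v then cnt v else 0) <= 2 * \sum_v cnt v.
  rewrite e4 -big_split big_distrr /=; apply: leq_sum => v _.
  have := cnt_pos v; case: ifP; lia.
lia.
Qed.

End Comb.

End P_Comb.
Import P_Comb.

Module P_Main.

Section Main.
Variables (R : realType) (V : finType) (d : nat).

Lemma rig_lin (F : {set {set V}}) (p q : conf R V d) (t : R) :
  rigidity_matrix (lerp p q t) F =
  (rigidity_matrix p F + t *: (rigidity_matrix q F - rigidity_matrix p F))%R.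
Proof.
apply/matrixP => i j; rewrite !mxE; cbv zeta.
by case: ifP => _; rewrite /lerp; ring.
Qed.

Definition rig_lm (F : {set {set V}}) : lmat R V d := LMat (@rig_lin F).

Lemma W_lin (vv : 'I_d.+1 -> V) (p q : conf R V d) (t : R) :
  Wm p vv = Wm p vv.
Proof. by []. Qed.

Lemma W_lin' (vv : 'I_d.+1 -> V) (p q : conf R V d) (t : R) :
  Wm (lerp p q t) vv = (Wm p vv + t *: (Wm q vv - Wm p vv))%R.
Proof. by apply/matrixP => i j; rewrite !mxE /lerp; ring. Qed.

Definition W_lm (vv : 'I_d.+1 -> V) : lmat R V d := LMat (@W_lin' vv).

Lemma in_In (T : eqType) (x : T) (s : seq T) : x \in s -> List.In x s.
Proof.
elim: s => [|y s IH] //=; rewrite inE => /orP [/eqP ->|h]; [by left | right; exact: IH].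
Qed.

End Main.


End P_Main.
Import P_Main.

Theorem theorem5p4 (R : realType) (V : finType) (d : nat) (E : {set {set V}}) :
  1 <= d ->
  (forall e, e \in E -> #|e| = 2) ->
  k_connected d.+1 E ->
  redundantly_rigid R d E ->
  M_separable R d E ->
  (('C(d.+1, 2))%:Z <= \sum_(H in M_components R d E) dof R d H)%R.
Proof.
move=> d1 H2 [hV2 conn] rr ms.
have hV : d.+1 <= #|V| by apply: ltnW.
pose vv := fun i : 'I_d.+1 => enum_val (widen_ord hV i) : V.
have vv_inj : injective vv.
  by move=> i j /enum_val_inj /(congr1 val) /= /val_inj.
pose s := @W_lm R V d vv :: [seq @rig_lm R V d F | F <- enum {: {set {set V}}}].
have [p0 hp0] := generic s.
have rig_in : forall F, List.In (@rig_lm R V d F) s.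
  move=> F; right; apply/List.in_map_iff; exists F; split => //.
  by apply: in_In; rewrite mem_enum.
have rdE : forall F, rd R d F = rank_at p0 F.
  move=> F; rewrite /rd; case: ex_maxnP => n /asboolP [q <-] hmax.
  apply/eqP; rewrite eqn_leq; apply/andP; split.
    exact: (hp0 _ (rig_in F) q).
  by apply: hmax; apply/asboolP; exists p0.
have uW : Wm p0 vv \in unitmx.
  pose ps := fun (v : V) (k : 'I_d) => ((v == vv (lift ord0 k))%:R : R)%R.
  have W1 : Wm ps vv = 1%:M%R.
    apply/matrixP => i j; rewrite !mxE /ps (inj_eq vv_inj) (inj_eq (@lift_inj _ ord0)).
    by rewrite (inj_eq vv_inj) eq_sym (negbTE (neq_lift _ _)) subr0.
  have := hp0 (@W_lm R V d vv) (or_introl erefl) ps; rewrite /= W1 mxrank1 => h.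
  rewrite -row_full_unit /row_full eqn_leq rank_leq_col /=.
  exact: h.
have r_card : forall X : {set {set V}}, rd R d X <= #|X| by move=> X; rewrite rdE; exact: rank_M_card.
have r_mono : forall X Y : {set {set V}}, X \subset Y -> rd R d X <= rd R d Y.
  by move=> X Y h; rewrite !rdE; exact: rank_M_mono.
have r_sub : forall X Y : {set {set V}},
    rd R d (X :|: Y) + rd R d (X :&: Y) <= rd R d X + rd R d Y.
  by move=> X Y; rewrite !rdE; exact: rank_M_sub.
set C2 := 'C(d.+1, 2).
have rE : rd R d E + C2 <= #|V| * d by rewrite rdE; exact: rank_bound uW H2.
have circ_e : forall e, e \in E -> exists C : {set {set V}}, [/\ C \subset E, e \in C, rd R d C < #|C| &
      forall D : {set {set V}}, D \proper C -> rd R d D = #|D|].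
  move=> e eE; apply: (closure_circ r_card r_mono r_sub eE).
  have := rr e eE; rewrite /rigid hV => h.
  have m := r_mono _ _ (subD1set E e).
  rewrite h in m *; rewrite [d * _]mulnC in m *.
  move: (rd R d E) rE m => x; rewrite -/C2; move: C2 (#|V| * d) => c nd; lia.
have circ_big : forall C : {set {set V}}, rd R d C < #|C| -> C \subset E -> d < #|verts C|.
  move=> C dC sCE; rewrite ltnNge; apply/negP => small.
  have [p hp] := @small_indep R V d C (fun S SC => H2 S (subsetP sCE S SC)) small.
  have : rank_at p C <= rd R d C.
    rewrite /rd; case: ex_maxnP => n _ hmax; apply: hmax; apply/asboolP; by exists p.
  move: hp dC; move: (rank_at p C) (rd R d C) #|C| => a b c; lia.
set P := M_components R d E.
have eqiv := @mrelr_equiv _ _ r_card r_mono r_sub E.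
have pP : partition P E := equivalence_partitionP eqiv.
have sumr := @sum_rank_blocks _ _ r_card r_mono r_sub E.
rewrite -/P in sumr.
have cov : forall x : V, exists2 e, e \in E & x \in e.
  move=> x.
  have [y yx] : exists y, y != x.
    case: (pickP (fun y => y != x)) => [y yx|all1]; first by exists y.
    have : [set: V] \subset [set x].
      by apply/subsetP => y _; rewrite inE; have := all1 y => /= /negbFE.
    by move/subset_leq_card; rewrite cardsT cards1; lia.
  have := conn set0 _ x y; rewrite cards0 !inE => /(_ isT isT isT).
  case/connectP => [[|z t] /= pth yl]; first by rewrite yl eqxx in yx.
  case/andP: pth => /and3P [_ _ eE] _.
  by exists [set x; z] => //; rewrite !inE eqxx.
have bigH : forall H, H \in P -> d.+1 <= #|verts H|.
  move=> H /imsetP [x xE ->].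
  have [C [sCE xC dC mC]] := circ_e x xE.
  apply: (leq_trans (circ_big C dC sCE)); apply: subset_leq_card.
  apply/subsetP => v /bigcupP [e eC ve]; apply/bigcupP; exists e => //.
  rewrite inE (subsetP sCE e eC) /=.
  have cC : circ (rd R d) E C.
    by rewrite /circ dC sCE /=; apply/forallP => D; apply/implyP => pD; rewrite mC.
  exact: (@circ_in_block _ (rd R d) E C x e cC xC eC).
have P2 : 2 <= #|P|.
  move: ms; rewrite /M_separable /M_connected negb_forall_in => /existsP [e /andP [eE]].
  rewrite negb_forall_in => /existsP [f /andP [fE nef]].
  set Be := [set y in E | mrel R d E e y]; set Bf := [set y in E | mrel R d E f y].
  have BeP : Be \in P by apply/imsetP; exists e.
  have BfP : Bf \in P by apply/imsetP; exists f.
  have neB : Be != Bf.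
    apply/negP => /eqP eB.
    have : f \in Bf by rewrite inE fE; exact: (fst (eqiv f f f fE fE fE)).
    by rewrite -eB inE fE (negbTE nef).
  have : [set Be; Bf] \subset P by apply/subsetP => B; rewrite !inE => /orP [] /eqP ->.
  by move/subset_leq_card; rewrite cards2 neB.
have hcomb := comb pP cov bigH P2 conn.
have sumZ : forall (I : finType) (Q : pred I) (F : I -> nat),
    Posz (\sum_(i | Q i) F i) = (\sum_(i | Q i) Posz (F i))%R.
  by move=> I Q F; exact: (big_morph Posz PoszD (erefl _)).
have eS : (\sum_(H in P) dof R d H)%R =
   (Posz (\sum_(H in P) d * #|verts H|) - Posz (\sum_(H in P) C2) - Posz (\sum_(H in P) rd R d H))%R.
  rewrite !sumZ -!sumrB; apply: eq_bigr => H _; by rewrite /dof.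
rewrite eS sum_nat_const -big_distrr /=.
have hC : C2 * 2 = d.+1 * d.
  by rewrite /C2 bin2 muln2 halfK oddM /= andNb subn0.
clear eS; move: hcomb sumr rE hC.
move: (\sum_(H in P) #|verts H|) (\sum_(H in P) rd R d H) (rd R d E) #|P| #|V| C2.
move=> T Sr rdE' q n c h1 h2 h3 h4.
have h5 : d * (2 * n + q * d.+1) <= d * (2 * T) by rewrite leq_mul2l h1 orbT.
nia.
Qed.
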